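(* There is a constant $c>0$ such that the following holds for all $n\ge 2$. Let $q,t_1,\dots,t_n$ be $n+1$ distinct qubits, and for each $i$ let $D_i$ be an arbitrary diagonal two-qubit unitary gate acting on the pair $(q,t_i)$. Then the operator $D_nD_{n-1}\cdots D_1$ can be embedded, using at most $cn$ ancillae, in a quantum circuit of depth at most $c\log n$.
   Context: Qubits have computational basis $|0\rangle,|1\rangle$. A diagonal two-qubit gate is a unitary of the form $\mathrm{diag}(e^{i\theta_{00}},e^{i\theta_{01}},e^{i\theta_{10}},e^{i\theta_{11}})$ in the computational basis. A one-layer circuit is a tensor product of arbitrary one-qubit and two-qubit unitary gates acting on pairwise disjoint sets of qubits; a circuit of depth $k$ is a product of $k$ one-layer circuits. An operator $F$ on $n'$ qubits is embedded in an operator $M$ on $n'+m$ qubits using $m$ ancillae if $M(|\psi\rangle\otimes|0\cdots0\rangle)=(F|\psi\rangle)\otimes|0\cdots0\rangle$ for all $|\psi\rangle$, where the last $m$ qubits are the ancillae. *)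

(* Defs.v *)
From Stdlib Require Import Reals.
From HB Require Import structures.
From mathcomp Require Import all_boot all_order all_algebra.
From mathcomp Require Import Rstruct complex.
Set Implicit Arguments. Unset Strict Implicit. Unset Printing Implicit Defensive.
Import Order.TTheory GRing.Theory Num.Theory.
Local Open Scope ring_scope.

Definition C := complex R.

Definition expi (a : R) : C := Complex (cos a) (sin a).

Definition basis (N : nat) := {ffun 'I_N -> bool}.
(* operators on N qubits, given by their matrix entries <x|A|y> *)
Definition op (N : nat) := basis N -> basis N -> C.
Definition vec (N : nat) := basis N -> C.

Definition opmul N (A B : op N) : op N :=
  fun x y => \sum_(z : basis N) A x z * B z y.
Definition opid N : op N := fun x y => (x == y)%:R.
Definition opapp N (A : op N) (v : vec N) : vec N :=
  fun x => \sum_(y : basis N) A x y * v y.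

Definition unitary n (U : 'M[C]_n) : Prop :=
  U *m (map_mx (@conjc _) U)^T = 1%:M.

Definition b2I (b : bool) : 'I_2 := inord (nat_of_bool b).
Definition idx2 (a b : bool) : 'I_4 := inord (2 * nat_of_bool a + nat_of_bool b).

(* A one-layer circuit on N qubits: the qubits are partitioned into blocks
   {i, pair i} (pair is an involution); a block with pair i = i carries a
   one-qubit unitary one i, a block {i, pair i} with i < pair i carries a
   two-qubit unitary two i acting on (qubit i, qubit (pair i)). *)
Record layer (N : nat) := Layer {
  pair : 'I_N -> 'I_N;
  one : 'I_N -> 'M[C]_2;
  two : 'I_N -> 'M[C]_4 }.

Definition layer_ok N (L : layer N) : Prop :=
  (forall i : 'I_N, pair L (pair L i) = i) /\
  (forall i : 'I_N, pair L i = i -> unitary (one L i)) /\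
  (forall i : 'I_N, (i < pair L i)%N -> unitary (two L i)).

Definition layer_op N (L : layer N) : op N := fun x y =>
  (\prod_(i : 'I_N | pair L i == i) one L i (b2I (x i)) (b2I (y i))) *
  (\prod_(i : 'I_N | (i < pair L i)%N)
      two L i (idx2 (x i) (x (pair L i))) (idx2 (y i) (y (pair L i)))).

Fixpoint layers_ok N (ls : seq (layer N)) : Prop :=
  match ls with
  | [::] => True
  | L :: ls' => layer_ok L /\ layers_ok ls'
  end.

Definition depth_circuit N (k : nat) (M : op N) : Prop :=
  exists ls : seq (layer N),
    size ls = k /\ layers_ok ls /\ M = foldr (@opmul N) (@opid N) (map (@layer_op N) ls).

(* Embedding with m ancillae (the last m qubits) *)
Definition main_part n m (x : basis (n + m)) : basis n := [ffun i => x (lshift m i)].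
Definition anc_part n m (x : basis (n + m)) : basis m := [ffun j => x (rshift n j)].
Definition tensor0 n m (v : vec n) : vec (n + m) := fun x =>
  if anc_part x == [ffun _ => false] then v (main_part x) else 0.

Definition embeds n m (F : op n) (M : op (n + m)) : Prop :=
  forall v : vec n, forall x, opapp M (@tensor0 n m v) x = @tensor0 n m (opapp F v) x.

Definition diag_gate (th : 'I_4 -> R) : 'M[C]_4 := diag_mx (\row_k expi (th k)).

Definition two_qubit_on N (a b : 'I_N) (G : 'M[C]_4) : op N := fun x y =>
  G (idx2 (x a) (x b)) (idx2 (y a) (y b)) *
  \prod_(k : 'I_N | (k != a) && (k != b)) (x k == y k)%:R.

(* Main.v *)
Require Import Defs.
From Stdlib Require Import Reals Lra.
From mathcomp Require Import all_boot all_order all_algebra.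
From mathcomp Require Import Rstruct complex zify.
Set Implicit Arguments. Unset Strict Implicit. Unset Printing Implicit Defensive.
Import Order.TTheory GRing.Theory Num.Theory.
Definition pairOf N (f : nat -> nat) (k : 'I_N) : 'I_N := insubd k (f k).

Lemma pairOf_val N f (k : 'I_N) : (forall k, k < N -> f k < N) -> val (pairOf f k) = f k.
Proof. by move=> h; rewrite /pairOf insubdK //; apply: h. Qed.

Lemma pairOf_inv N f : (forall k, k < N -> f k < N) -> (forall k, k < N -> f (f k) = k) ->
  forall k : 'I_N, pairOf f (pairOf f k) = k.
Proof.
move=> h1 h2 k; apply: val_inj; rewrite !pairOf_val //; exact: h2.
Qed.

Definition fQ (A q : nat) (k : nat) := if k == q then A else if k == A then q else k.
Definition fR (A m e : nat) (k : nat) :=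
  if [&& A <= k, k < A + e.*2 & e.*2 <= m] then (if k < A + e then k + e else k - e) else k.

Lemma fQ_lt A q m k : q < A -> 0 < m -> k < A + m -> fQ A q k < A + m.
Proof. rewrite /fQ; do ! case: ifP; lia. Qed.
Lemma fQ_inv A q k : q < A -> fQ A q (fQ A q k) = k.
Proof. rewrite /fQ; do ! case: ifP; lia. Qed.
Lemma fR_lt A m e k : k < A + m -> fR A m e k < A + m.
Proof. rewrite /fR; do ! case: ifP; lia. Qed.
Lemma fR_inv A m e k : 0 < e -> fR A m e (fR A m e k) = k.
Proof. rewrite /fR; do ! case: ifP; lia. Qed.

Local Open Scope ring_scope.

Lemma expiJ a : expi a * conjc (expi a) = 1.
Proof.
rewrite /expi /=.
have h := sin2_cos2 a. rewrite /Rsqr in h.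
congr Complex.
  by rewrite mulrN opprK addrC; exact: h.
by rewrite mulrN [sin a * _]mulrC addNr.
Qed.

Definition bit0 (c : 'I_4) : bool := (2 <= c)%N.
Definition bit1 (c : 'I_4) : bool := odd c.

Lemma idx2_val a b : val (idx2 a b) = (2 * a + b)%N.
Proof. by rewrite /idx2; apply: inordK; case: a; case: b. Qed.

Lemma idx2K0 a b : bit0 (idx2 a b) = a.
Proof. by rewrite /bit0 idx2_val; case: a; case: b. Qed.
Lemma idx2K1 a b : bit1 (idx2 a b) = b.
Proof. by rewrite /bit1 idx2_val; case: a; case: b. Qed.
Lemma idx2_bits c : idx2 (bit0 c) (bit1 c) = c.
Proof.
apply: val_inj; rewrite idx2_val /bit0 /bit1.
by case: c => [[|[|[|[|k]]]] hk].
Qed.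
Lemma b2I_val a : nat_of_ord (b2I a) = a.
Proof. by rewrite /b2I; apply: inordK; case: a. Qed.
Lemma b2I_eq a b : (b2I a == b2I b) = (a == b).
Proof.
apply/eqP/eqP => [h|->//]; have := congr1 (@nat_of_ord 2) h; rewrite !b2I_val.
by case: a {h}; case: b.
Qed.

Lemma prod_nat_bool (I : finType) (P B : pred I) :
  \prod_(i | P i) ((B i)%:R : Defs.C) = ([forall (i | P i), B i])%:R.
Proof.
rewrite -big_andE.
apply: (big_rec2 (fun (a : Defs.C) (b : bool) => a = b%:R)) => // i a b _ ->.
by rewrite -natrM mulnb.
Qed.

Definition mono N (ph : basis N -> Defs.C) (f : basis N -> basis N) : op N :=
  fun x y => ph x * (y == f x)%:R.

Lemma opmul_mono N (A B : op N) ph f ps g :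
  (forall x y, A x y = mono ph f x y) -> (forall x y, B x y = mono ps g x y) ->
  forall x y, opmul A B x y = mono (fun x => ph x * ps (f x)) (fun x => g (f x)) x y.
Proof.
move=> hA hB x y; rewrite /opmul /mono.
under eq_bigr => z _ do rewrite hA hB /mono.
rewrite (bigD1 (f x)) //= eqxx mulr1 big1 ?addr0; first by rewrite mulrA.
by move=> z /negbTE hz; rewrite hz mulr0 mul0r.
Qed.

Lemma opid_mono N x y : @opid N x y = mono (fun _ => 1) id x y.
Proof. by rewrite /opid /mono mul1r eq_sym. Qed.

Record spec N := Spec { sp_pair : 'I_N -> 'I_N; sp_ph : 'I_N -> 'I_4 -> Defs.C;
   sp_sg : 'I_N -> 'I_4 -> 'I_4 }.

Definition gmat (ph : 'I_4 -> Defs.C) (sg : 'I_4 -> 'I_4) : 'M[Defs.C]_4 :=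
  \matrix_(c, d) (ph c * (d == sg c)%:R).

Definition mk N (s : spec N) : layer N :=
  Layer (sp_pair s) (fun _ => 1%:M) (fun i => gmat (sp_ph s i) (sp_sg s i)).

Definition sph N (s : spec N) (x : basis N) : Defs.C :=
  \prod_(i : 'I_N | (i < sp_pair s i)%N)
     sp_ph s i (idx2 (x i) (x (sp_pair s i))).

Definition sfn N (s : spec N) (x : basis N) : basis N :=
  [ffun k : 'I_N => if (k < sp_pair s k)%N then bit0 (sp_sg s k (idx2 (x k) (x (sp_pair s k))))
    else if (sp_pair s k < k)%N then
      bit1 (sp_sg s (sp_pair s k) (idx2 (x (sp_pair s k)) (x k)))
    else x k].

Lemma layer_mono N (s : spec N) : (forall i, sp_pair s (sp_pair s i) = i) ->
  forall x y, layer_op (mk s) x y = mono (sph s) (sfn s) x y.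
Proof.
move=> inv x y; rewrite /layer_op /mono /sph /=.
under eq_bigr => i _ do rewrite mxE.
under [X in _ * X]eq_bigr => i _ do rewrite mxE.
rewrite big_split /= mulrCA; congr (_ * _).
rewrite (prod_nat_bool (fun i => sp_pair s i == i)) prod_nat_bool -natrM mulnb.
congr (GRing.natmul _ (nat_of_bool _)); apply/idP/idP.
  move=> /andP [/forallP h1 /forallP h2]; apply/eqP/ffunP => k; rewrite ffunE.
  case: (ltngtP k (sp_pair s k)) => hk.
  - by have := h2 k; rewrite hk /= => /eqP <-; rewrite idx2K0.
  - have := h2 (sp_pair s k); rewrite inv hk /= => /eqP <-; by rewrite idx2K1.
  - have e : sp_pair s k == k by apply/eqP/val_inj.
    by have := h1 k; rewrite e /= b2I_eq => /eqP.
move=> /eqP ->; apply/andP; split; apply/forallP => i; apply/implyP => h; rewrite !ffunE.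
  by rewrite (eqP h) ltnn b2I_eq.
rewrite h inv ltnNge (ltnW h) /= h.
by rewrite idx2_bits.
Qed.

Lemma gmat_unitary (ph : 'I_4 -> Defs.C) (sg : 'I_4 -> 'I_4) :
  injective sg -> (forall c, ph c * conjc (ph c) = 1) -> unitary (gmat ph sg).
Proof.
move=> inj hph; rewrite /unitary; apply/matrixP => i j; rewrite !mxE.
under eq_bigr => k _ do rewrite !mxE rmorphM /= conjc_nat.
rewrite (bigD1 (sg i)) //= eqxx big1 ?addr0.
  case: (eqVneq i j) => [->|hij]; first by rewrite eqxx !mulr1 hph.
  have : sg i != sg j by apply: contra hij => /eqP /inj ->.
  by move=> /negbTE ->; rewrite !mulr0.
by move=> k /negbTE ->; rewrite mulr0 mul0r.
Qed.

Lemma one_unitary : unitary (1%:M : 'M[Defs.C]_2).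
Proof.
rewrite /unitary; apply/matrixP => i j; rewrite !mxE.
rewrite (bigD1 i) //= big1 ?addr0.
  by rewrite !mxE eqxx mul1r conjc_nat eq_sym.
by move=> k hk; rewrite !mxE eq_sym (negbTE hk) mul0r.
Qed.

Fixpoint Gf N (ls : seq (spec N)) (x : basis N) : basis N :=
  if ls is s :: l then Gf l (sfn s x) else x.
Fixpoint Phi N (ls : seq (spec N)) (x : basis N) : Defs.C :=
  if ls is s :: l then sph s x * Phi l (sfn s x) else 1.
Fixpoint goodl N (ls : seq (spec N)) : Prop :=
  if ls is s :: l then
    [/\ (forall i, sp_pair s (sp_pair s i) = i), (forall i, injective (sp_sg s i)),
        (forall i c, sp_ph s i c * conjc (sp_ph s i c) = 1) & goodl l]
  else True.


Lemma goodl_cat N (l1 l2 : seq (spec N)) : goodl l1 -> goodl l2 -> goodl (l1 ++ l2).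
Proof. by elim: l1 => //= s l IH [h1 h2 h3 h4] g2; split => //; apply: IH. Qed.

Lemma goodl_ok N (ls : seq (spec N)) : goodl ls -> layers_ok (map (@mk N) ls).
Proof.
elim: ls => //= s l IH [h1 h2 h3 h4]; split; last exact: IH.
split => //; split => i _ /=; first exact: one_unitary.
by apply: gmat_unitary.
Qed.

Lemma foldr_mono N (ls : seq (spec N)) : goodl ls -> forall x y,
  foldr (@opmul N) (@opid N) (map (@layer_op N) (map (@mk N) ls)) x y =
  mono (Phi ls) (Gf ls) x y.
Proof.
elim: ls => [_|s l IH [h1 h2 h3 h4]] x y /=; first by rewrite opid_mono.
by apply: opmul_mono; [apply: layer_mono|apply: IH].
Qed.

Lemma Gf_cat N (l1 l2 : seq (spec N)) x : Gf (l1 ++ l2) x = Gf l2 (Gf l1 x).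
Proof. by elim: l1 x => //= s l IH x; rewrite IH. Qed.
Lemma Phi_cat N (l1 l2 : seq (spec N)) x : Phi (l1 ++ l2) x = Phi l1 x * Phi l2 (Gf l1 x).
Proof. by elim: l1 x => [|s l IH] x /=; rewrite ?mul1r // IH mulrA. Qed.

Definition cnot4 (c : 'I_4) : 'I_4 := idx2 (bit0 c) (bit1 c (+) bit0 c).
Lemma cnot4K : involutive cnot4.
Proof. by move=> c; rewrite /cnot4 idx2K0 idx2K1 -addbA addbb addbF idx2_bits. Qed.

Definition cspec N (p : 'I_N -> 'I_N) : spec N := Spec p (fun _ _ => 1) (fun _ => cnot4).
Definition cf N (p : 'I_N -> 'I_N) (x : basis N) : basis N :=
  [ffun k : 'I_N => if (p k < k)%N then x k (+) x (p k) else x k].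

Lemma cspec_sfn N (p : 'I_N -> 'I_N) x : sfn (cspec p) x = cf p x.
Proof.
apply/ffunP => k; rewrite !ffunE /=.
case: (ltngtP k (p k)) => h.
- by rewrite /cnot4 !(idx2K0, idx2K1).
- by rewrite /cnot4 !(idx2K0, idx2K1) addbC.
- done.
Qed.
Lemma cspec_sph N (p : 'I_N -> 'I_N) x : sph (cspec p) x = 1.
Proof. by rewrite /sph big1. Qed.

Lemma cf_inv N (p : 'I_N -> 'I_N) : (forall i, p (p i) = i) -> forall x, cf p (cf p x) = x.
Proof.
move=> inv x; apply/ffunP => k; rewrite !ffunE.
case: (ltnP (p k) k) => h.
  by rewrite inv ltnNge (ltnW h) /= -addbA addbb addbF.
by [].
Qed.

Fixpoint allinv N (ps : seq ('I_N -> 'I_N)) : Prop :=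
  if ps is p :: l then (forall i, p (p i) = i) /\ allinv l else True.

Lemma goodl_c N (ps : seq ('I_N -> 'I_N)) : allinv ps -> goodl (map (@cspec N) ps).
Proof.
elim: ps => //= p ps IH [h1 h2]; split => //.
- by move=> i; apply: (can_inj cnot4K).
- by move=> i c; rewrite mul1r oppr0.
- by apply: IH.
Qed.

Lemma Phi_c N (ps : seq ('I_N -> 'I_N)) x : Phi (map (@cspec N) ps) x = 1.
Proof. by elim: ps x => //= p ps IH x; rewrite IH cspec_sph mulr1. Qed.

Lemma Gf_c_rev N (ps : seq ('I_N -> 'I_N)) : allinv ps ->
  forall x, Gf (map (@cspec N) (rev ps)) (Gf (map (@cspec N) ps) x) = x.
Proof.
elim: ps => //= p ps IH [h1 h2] x.
rewrite rev_cons -cats1 map_cat Gf_cat IH //=.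
by rewrite !cspec_sfn cf_inv.
Qed.

Lemma sfn_id N (s : spec N) : (forall i c, sp_sg s i c = c) -> forall x, sfn s x = x.
Proof.
move=> hs x; apply/ffunP => k; rewrite !ffunE !hs.
by case: ifP => _; [rewrite idx2K0|case: ifP => _ //; rewrite idx2K1].
Qed.

Definition tq n m (t : 'I_n -> 'I_n.+1) (j : 'I_n) : 'I_(n.+1 + m) := lshift m (t j).
Definition ancj n m (q : 'I_n.+1) (j : 'I_n) : 'I_(n.+1 + m) := insubd (lshift m q) (n.+1 + j)%N.
Definition pairD n m (q : 'I_n.+1) (t : 'I_n -> 'I_n.+1) (k : 'I_(n.+1 + m)) : 'I_(n.+1 + m) :=
  if [pick j | tq m t j == k] is Some j then ancj m q j
  else if [pick j | ancj m q j == k] is Some j then tq m t j else k.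

Lemma tq_val n m t j : nat_of_ord (@tq n m t j) = t j.
Proof. by []. Qed.
Lemma ancj_val n m q (j : 'I_n) : (n <= m)%N -> nat_of_ord (@ancj n m q j) = (n.+1 + j)%N.
Proof. move=> h; rewrite /ancj insubdK //= -topredE /=; have := ltn_ord j; lia. Qed.

Lemma tq_inj n m t : injective t -> injective (@tq n m t).
Proof. by move=> ht j j' /(congr1 (@nat_of_ord _)); rewrite !tq_val => /val_inj /ht. Qed.
Lemma ancj_inj n m q : (n <= m)%N -> injective (@ancj n m q).
Proof. move=> h j j' /(congr1 (@nat_of_ord _)); rewrite !ancj_val // => e; apply: val_inj => /=; lia. Qed.

Lemma pairD_tq n m q t j : injective t -> @pairD n m q t (tq m t j) = ancj m q j.
Proof.
move=> ht; rewrite /pairD; case: pickP => [j' /eqP /(tq_inj ht) -> //|/(_ j)].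
by rewrite eqxx.
Qed.
Lemma pairD_anc n m q t j : (n <= m)%N -> @pairD n m q t (ancj m q j) = tq m t j.
Proof.
move=> h; rewrite /pairD; case: pickP => [j' /eqP e|_].
  have := congr1 (@nat_of_ord _) e; rewrite tq_val ancj_val //; have := ltn_ord (t j'); lia.
case: pickP => [j' /eqP /(ancj_inj h) -> //|/(_ j)].
by rewrite eqxx.
Qed.

Lemma pairD_inv n m q t : injective t -> (n <= m)%N -> forall k, @pairD n m q t (pairD q t k) = k.
Proof.
move=> ht h k.
case: (pickP (fun j => tq m t j == k)) => [j /eqP <-|h1]; first by rewrite pairD_tq // pairD_anc.
case: (pickP (fun j => ancj m q j == k)) => [j /eqP <-|h2]; first by rewrite pairD_anc // pairD_tq.
have e : pairD q t k = k.
  rewrite /pairD; case: pickP => [j|_]; first by rewrite h1.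
  by case: pickP => [j|_]; first by rewrite h2.
by rewrite e e.
Qed.

Lemma pairD_lt n m q t : injective t -> (n <= m)%N -> forall k : 'I_(n.+1 + m),
  (k < @pairD n m q t k)%N = (k \in (tq m t) @: setT).
Proof.
move=> ht h k; apply/idP/imsetP.
  case: (pickP (fun j => tq m t j == k)) => [j /eqP <- _|h1]; first by exists j.
  case: (pickP (fun j => ancj m q j == k)) => [j /eqP <-|h2].
    rewrite pairD_anc // tq_val ancj_val //; have := ltn_ord (t j); lia.
  have e : pairD q t k = k.
    rewrite /pairD; case: pickP => [j|_]; first by rewrite h1.
    by case: pickP => [j|_]; first by rewrite h2.
  by rewrite e ltnn.
case=> j _ ->; rewrite pairD_tq // tq_val ancj_val //; have := ltn_ord (t j); lia.
Qed.

Definition swap4 (c : 'I_4) : 'I_4 := idx2 (bit1 c) (bit0 c).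

Definition dspec n m q t (theta : 'I_n -> 'I_4 -> R) : spec (n.+1 + m) :=
  Spec (@pairD n m q t)
    (fun i c => if [pick j | tq m t j == i] is Some j then expi (theta j (swap4 c)) else 1)
    (fun _ c => c).

Lemma dspec_good n m q t theta : injective t -> (n <= m)%N -> goodl [:: @dspec n m q t theta].
Proof.
move=> ht h; split => //=.
- exact: pairD_inv.
- by move=> i c c'.
- move=> i c; case: pickP => [j _|_]; first exact: expiJ.
  by rewrite mul1r conjc1.
Qed.

Lemma dspec_sph n m q t theta (x : basis (n.+1 + m)) : injective t -> (n <= m)%N ->
  sph (@dspec n m q t theta) x =
  \prod_(j : 'I_n) expi (theta j (idx2 (x (ancj m q j)) (x (tq m t j)))).
Proof.
move=> ht h; rewrite /sph /=.
rewrite (eq_bigl (fun i => i \in (tq m t) @: setT)); last by move=> i; rewrite pairD_lt.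
rewrite big_imset /=; last by move=> j j' _ _; apply: tq_inj.
apply: eq_big => [j|j _]; first by rewrite in_setT.
rewrite pairD_tq //.
case: pickP => [j' /eqP /(tq_inj ht) ->|/(_ j)]; last by rewrite eqxx.
by rewrite /swap4 idx2K0 idx2K1.
Qed.

Lemma big_opmul_diag N (I : Type) (r : seq I) (G : I -> op N) (ph : I -> basis N -> Defs.C) :
  (forall i x y, G i x y = mono (ph i) id x y) ->
  forall x y, (\big[@opmul N/@opid N]_(i <- r) G i) x y =
    mono (fun x => \prod_(i <- r) ph i x) id x y.
Proof.
move=> hG; elim: r => [|i r IH] x y; first by rewrite big_nil opid_mono /mono big_nil.
by rewrite big_cons (opmul_mono (hG i) IH) /mono big_cons.
Qed.

Lemma D_mono N (a b : 'I_N) th : a != b -> forall x y,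
  two_qubit_on a b (diag_gate th) x y = mono (fun x => expi (th (idx2 (x a) (x b)))) id x y.
Proof.
move=> hab x y; rewrite /two_qubit_on /diag_gate /mono !mxE.
rewrite -[expi _ *+ _]mulr_natr -mulrA (prod_nat_bool (fun k => (k != a) && (k != b))) -natrM mulnb.
congr (_ * GRing.natmul _ (nat_of_bool _)).
apply/idP/eqP.
  move=> /andP [/eqP e /forallP h]; apply/ffunP => k.
  case: (eqVneq k a) => [->|ha].
    by have := congr1 bit0 e; rewrite !idx2K0.
  case: (eqVneq k b) => [->|hb].
    by have := congr1 bit1 e; rewrite !idx2K1.
  by have := h k; rewrite ha hb /= => /eqP.
move=> ->; rewrite eqxx /=; apply/forallP => k; exact/implyP.
Qed.

Definition st n m (q : 'I_n.+1) r (x : basis (n.+1 + m)) : basis (n.+1 + m) :=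
  [ffun k : 'I_(n.+1 + m) => if (k < n.+1)%N then x k
     else if (k < n.+1 + 2 ^ r)%N then x (lshift m q) else false].

Definition psQ n m (q : 'I_n.+1) : 'I_(n.+1 + m) -> 'I_(n.+1 + m) := pairOf (fQ n.+1 q).
Definition psR n m r : 'I_(n.+1 + m) -> 'I_(n.+1 + m) := pairOf (fR n.+1 m (2 ^ r)%N).

Lemma psQ_step n m q (x : basis (n.+1 + m)) : (0 < m)%N ->
  (forall k : 'I_(n.+1 + m), (n.+1 <= k)%N -> x k = false) ->
  cf (@psQ n m q) x = st q 0 x.
Proof.
move=> hm hx; have hq := ltn_ord q; apply/ffunP => k; rewrite !ffunE /psQ.
have hv : forall k : 'I_(n.+1 + m), nat_of_ord (pairOf (fQ n.+1 q) k) = fQ n.+1 q k.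
  by move=> k'; apply: pairOf_val => k'' hk''; apply: fQ_lt.
rewrite hv expn0.
case: (ltnP k n.+1) => hk.
  have -> : (fQ n.+1 q k < k)%N = false by rewrite /fQ; do ! case: ifP; lia.
  by [].
case: (eqVneq (nat_of_ord k) n.+1) => ek.
  have -> : (fQ n.+1 q k < k)%N = true by rewrite /fQ; do ! case: ifP; lia.
  have -> : (k < n.+1 + 1)%N = true by lia.
  rewrite hx // /=.
  congr (x _); apply: val_inj; rewrite /= hv /fQ; do ! case: ifP; lia.
have -> : (fQ n.+1 q k < k)%N = false by rewrite /fQ; do ! case: ifP; lia.
have -> : (k < n.+1 + 1)%N = false by lia.
by rewrite hx.
Qed.

Lemma psR_step n m (q : 'I_n.+1) r (x : basis (n.+1 + m)) : (2 ^ r.+1 <= m)%N ->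
  cf (@psR n m r) (st q r x) = st q r.+1 x.
Proof.
move=> hm; apply/ffunP => k; rewrite !ffunE /psR.
have hv : forall k : 'I_(n.+1 + m), nat_of_ord (pairOf (fR n.+1 m (2 ^ r)%N) k) = fR n.+1 m (2 ^ r)%N k.
  by move=> k'; apply: pairOf_val => k'' hk''; apply: fR_lt.
rewrite !hv expnS.
move: hm; rewrite expnS; have : (0 < 2 ^ r)%N by rewrite expn_gt0.
move: (2 ^ r)%N => e he hm.
rewrite /fR; do ! case: ifP => //; try lia.
Qed.

Lemma st_up n m (q : 'I_n.+1) (x : basis (n.+1 + m)) r : (2 ^ r <= m)%N ->
  (forall k : 'I_(n.+1 + m), (n.+1 <= k)%N -> x k = false) ->
  Gf (map (@cspec _) (@psQ n m q :: map (@psR n m) (iota 0 r))) x = st q r x.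
Proof.
move=> hr hx; elim: r hr => [|r IH] hr.
  rewrite /= cspec_sfn psQ_step //; by apply: leq_trans hr.
have -> : iota 0 r.+1 = iota 0 r ++ [:: r] by rewrite -addn1 iotaD.
rewrite map_cat -cat_cons map_cat Gf_cat IH /=; last first.
  by apply: leq_trans hr; rewrite leq_exp2l.
by rewrite cspec_sfn psR_step.
Qed.

Lemma allinv_ps n m (q : 'I_n.+1) R : (0 < m)%N ->
  allinv (@psQ n m q :: map (@psR n m) (iota 0 R)).
Proof.
move=> hm; split.
  apply: pairOf_inv => k hk; [apply: fQ_lt => //; exact: ltn_ord|apply: fQ_inv; exact: ltn_ord].
elim: (iota 0 R) => //= r l IH; split => //.
apply: pairOf_inv => k hk; [exact: fR_lt|apply: fR_inv; by rewrite expn_gt0].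
Qed.

Local Close Scope ring_scope.

Local Open Scope R_scope.

Lemma ln_mono_le x y : 0 < x -> x <= y -> ln x <= ln y.
Proof.
move=> hx hxy; case: (Rle_lt_or_eq_dec _ _ hxy) => h.
  by apply: Rlt_le; apply: ln_increasing.
by rewrite h; apply: Rle_refl.
Qed.

Lemma real_bounds (n tl : nat) : (2 <= n)%N -> (2 ^ tl <= n)%N ->
  INR (2 * tl + 5) <= 20 * ln (INR n) /\ INR (2 ^ tl.+1) <= 20 * INR n.
Proof.
move=> hn htl.
have h2 : INR 2 <= INR n by apply: le_INR; apply/ssrnat.leP.
have hp : INR (2 ^ tl) <= INR n by apply: le_INR; apply/ssrnat.leP.
have e2 : INR 2 = 2 by [].
have hl2 := ln_lt_2.
have hpos : 0 < INR (2 ^ tl) by apply: lt_0_INR; apply/ssrnat.ltP; rewrite expn_gt0.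
have l1 : ln 2 <= ln (INR n) by apply: ln_mono_le; lra.
have l2 : INR tl * ln 2 <= ln (INR n).
  rewrite -ln_pow; last lra.
  apply: ln_mono_le; first by apply: pow_lt; lra.
  have -> : 2 ^ tl = INR (2 ^ tl)%N.
    elim: tl {htl hp hpos} => [|k IH]; first by rewrite expn0 /=.
    by rewrite expnS mult_INR /= IH.
  done.
split.
  rewrite plus_INR mult_INR e2.
  have -> : INR 5 = 5 by rewrite /INR; lra.
  have : 0 <= INR tl by apply: pos_INR.
  nra.
rewrite expnS mult_INR e2. lra.
Qed.

Definition c20 : R := 20.
Lemma c20_pos : 0 < c20. Proof. rewrite /c20; lra. Qed.
Local Close Scope R_scope.

Lemma Phi_cons N (s : spec N) l x : Phi (s :: l) x = (sph s x * Phi l (sfn s x))%R.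
Proof. by []. Qed.

Lemma sum_delta (T : finType) (A : Defs.C) (a : T) (g : T -> Defs.C) :
  (\sum_(y : T) A * (y == a)%:R * g y = A * g a)%R.
Proof.
rewrite (bigD1 a) //= eqxx mulr1 big1 ?addr0 // => y /negbTE ->.
by rewrite mulr0 mul0r.
Qed.

Lemma allinv_cat N (l1 l2 : seq ('I_N -> 'I_N)) : allinv l1 -> allinv l2 -> allinv (l1 ++ l2).
Proof. by elim: l1 => //= p l IH [h1 h2] h; split => //; apply: IH. Qed.
Lemma allinv_rev N (l : seq ('I_N -> 'I_N)) : allinv l -> allinv (rev l).
Proof.
elim: l => //= p l IH [h1 h2]; rewrite rev_cons -cats1; apply: allinv_cat; first exact: IH.
by [].
Qed.

Lemma anc0_of n m (x : basis (n.+1 + m)) : anc_part x == [ffun _ => false] ->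
  forall k : 'I_(n.+1 + m), (n.+1 <= k)%N -> x k = false.
Proof.
move=> /eqP hanc k hk.
have hj : (k - n.+1 < m)%N by have := ltn_ord k; lia.
have := congr1 (fun f : {ffun 'I_m -> bool} => f (Ordinal hj)) hanc; rewrite /= !ffunE.
have -> : rshift n.+1 (Ordinal hj) = k by apply: val_inj => /=; lia.
done.
Qed.

Theorem proposition3 :
  exists c : R, (0 < c)%R /\
  forall n : nat, (2 <= n)%N ->
  forall (q : 'I_n.+1) (t : 'I_n -> 'I_n.+1),
    injective t -> (forall i, t i != q) ->
  forall theta : 'I_n -> 'I_4 -> R,
    let D := fun i : 'I_n => two_qubit_on q (t i) (diag_gate (theta i)) in
    (* D_n D_{n-1} ... D_1 *)
    let F := \big[@opmul n.+1/@opid n.+1]_(i < n) D (rev_ord i) in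
    exists (m : nat) (M : op (n.+1 + m)),
      (INR m <= c * INR n)%R /\
      (exists k : nat, (INR k <= c * ln (INR n))%R /\ depth_circuit k M) /\
      embeds F M.
Proof.
exists c20; split; first by apply/RltP; exact: c20_pos.
move=> n hn q t ht htq theta D F.
set tl := trunc_log 2 n.
have h2tl : (2 ^ tl <= n)%N by apply: trunc_logP; lia.
have hnm : (n < 2 ^ tl.+1)%N by apply: trunc_log_ltn.
set m := (2 ^ tl.+1)%N.
have hm : (0 < m)%N by rewrite expn_gt0.
have hnm' : (n <= m)%N by apply: ltnW.
set ps := @psQ n m q :: map (@psR n m) (iota 0 tl.+1).
have hps : allinv ps by apply: allinv_ps.
set ls := map (@cspec _) ps ++ dspec m q t theta :: map (@cspec _) (rev ps).
have gls : goodl ls.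
  apply: goodl_cat; first exact: goodl_c.
  apply: (@goodl_cat _ [:: dspec m q t theta]); first exact: dspec_good.
  by apply: goodl_c; apply: allinv_rev.
exists m, (foldr (@opmul _) (@opid _) (map (@layer_op _) (map (@mk _) ls))).
have [b1 b2] := real_bounds hn h2tl.
split; first by apply/RleP.
split.
  exists (size ls); split.
    have -> : size ls = (2 * tl + 5)%N.
      by rewrite /ls size_cat /= !size_map size_rev /ps /= size_map size_iota; lia.
    by apply/RleP.
  exists (map (@mk _) ls); split; first by rewrite size_map.
  by split => //; apply: goodl_ok.
have hF : forall x y, F x y = mono (fun x => (\prod_(i < n)
    expi (theta (rev_ord i) (idx2 (x q) (x (t (rev_ord i))))))%R) id x y.
  move=> x' y'; rewrite /F; apply: big_opmul_diag => i x'' y''; rewrite /D.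
  by apply: D_mono; rewrite eq_sym htq.
move=> v x; rewrite /opapp.
under eq_bigr => y _ do rewrite foldr_mono // /mono.
rewrite sum_delta.
have GfX : Gf ls x = x.
  by rewrite /ls Gf_cat /= sfn_id // Gf_c_rev.
rewrite GfX /tensor0; case: ifP => hanc; last by rewrite mulr0.
under eq_bigr => y _ do rewrite hF /mono.
rewrite sum_delta.
congr (_ * _)%R.
rewrite /ls Phi_cat Phi_c mul1r Phi_cons Phi_c mulr1.
rewrite st_up //; last exact: anc0_of.
rewrite dspec_sph // [RHS](reindex_inj rev_ord_inj) /=.
apply: eq_bigr => j _; rewrite !ffunE rev_ordK ancj_val // tq_val.
have hj := ltn_ord j; have htj := ltn_ord (t j).
have -> : (n.+1 + j < n.+1)%N = false by lia.
have -> : (n.+1 + j < n.+1 + 2 ^ tl.+1)%N = true by lia.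
by rewrite htj.
Qed.
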